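(* Let $f=(f_1,\dots,f_P)^\top:\mathbb{R}^N\to\mathbb{R}^P$ and $g=(g_1,\dots,g_M)^\top:\mathbb{R}^N\to\mathbb{R}^M$ satisfy: each $f_i$ is strictly convex and continuously differentiable; each $g_j$ is convex and continuously differentiable; the problem $\min\{f(x)\mid g_j(x)\le 0,\ j=1,\dots,M\}$ is bounded; and there exists $\bar x\in\mathbb{R}^N$ with $g_j(\bar x)<0$ for all $j=1,\dots,M$. Let $\mathbb{X}:=\{x\in\mathbb{R}^N\mid g_j(x)\le 0,\ j=1,\dots,M\}$ and $\mathcal{W}:=\{w\in\mathbb{R}^P_+\mid \mathbf{1}^\top w=1\}$. Let $z:\mathcal{W}\to\mathbb{R}^N$ be an arbitrary neural network, and define $x:\mathcal{W}\to\mathbb{R}^N$ by \[x(w):=(1-t^*(z(w)))\,z(w)+t^*(z(w))\,\bar x,\qquad t^*(z):=\max_{j:\ g_j(z)>0}\left\{\frac{g_j(z)}{g_j(z)-g_j(\bar x)}\right\},\] where $t^*(z):=0$ if $g_j(z)\le 0$ for all $j$. Then $x(w)\in\mathbb{X}$ for every $w\in\mathcal{W}$.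
   Context: $\mathbf{1}=(1,\dots,1)^\top\in\mathbb{R}^P$. The problem is bounded if there is $y\in\mathbb{R}^P$ with $f(x)\in y+\mathbb{R}^P_+$ for all $x\in\mathbb{X}$. A neural network $\mathcal{W}\to\mathbb{R}^N$ is a map of the form $y_{\ell+1}$ where $y_0(w)=w$ and $y_l(w)=\Phi_l(\theta_{l,b}+\theta_{l,w}y_{l-1}(w))$ for $l=1,\dots,\ell+1$, with bias vectors $\theta_{l,b}$, weight matrices $\theta_{l,w}$ of compatible sizes, and activation functions $\Phi_l$. *)

(* Defs.v *)
From HB Require Import structures.
From mathcomp Require Import all_boot all_order all_algebra.
From mathcomp Require Import all_classical all_reals all_analysis.
Set Implicit Arguments. Unset Strict Implicit. Unset Printing Implicit Defensive.
Import Order.TTheory GRing.Theory Num.Theory.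
Import numFieldNormedType.Exports.
Local Open Scope ring_scope.

Section Defs.
Variable R : realType.

Definition convex_fun (N : nat) (h : 'cV[R]_N -> R) : Prop :=
  forall (x y : 'cV[R]_N) (t : R), 0 <= t -> t <= 1 ->
    h ((1 - t) *: x + t *: y) <= (1 - t) * h x + t * h y.

Definition strictly_convex_fun (N : nat) (h : 'cV[R]_N -> R) : Prop :=
  forall (x y : 'cV[R]_N) (t : R), x != y -> 0 < t -> t < 1 ->
    h ((1 - t) *: x + t *: y) < (1 - t) * h x + t * h y.

(* continuously differentiable: differentiable everywhere, and the
   derivative x |-> 'd h x v is continuous for every direction v
   (in finite dimension this is continuity of the derivative) *)
Definition C1_fun (N : nat) (h : 'cV[R]_N -> R) : Prop :=
  (forall x, differentiable h x) /\
  (forall v : 'cV[R]_N, continuous (fun x => ('d h x : 'cV[R]_N -> R) v)).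

Definition feasible (N M : nat) (g : 'I_M -> 'cV[R]_N -> R) (x : 'cV[R]_N) : Prop :=
  forall j : 'I_M, g j x <= 0.

Definition mo_bounded (N P M : nat) (f : 'I_P -> 'cV[R]_N -> R)
    (g : 'I_M -> 'cV[R]_N -> R) : Prop :=
  exists y : 'cV[R]_P, forall x, feasible g x -> forall i : 'I_P, y i 0 <= f i x.

Definition weight_simplex (P : nat) (w : 'cV[R]_P) : Prop :=
  (forall i : 'I_P, 0 <= w i 0) /\ \sum_(i < P) w i 0 = 1.

(* neural networks R^n -> R^m with l+1 >= 1 layers
   y_l = Phi_l (theta_{l,b} + theta_{l,w} y_{l-1}) *)
Inductive nnet : nat -> nat -> Type :=
| nn_layer (n m : nat) (b : 'cV[R]_m) (W : 'M[R]_(m, n))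
    (Phi : 'cV[R]_m -> 'cV[R]_m) : nnet n m
| nn_cons (n k m : nat) (prev : nnet n k) (b : 'cV[R]_m) (W : 'M[R]_(m, k))
    (Phi : 'cV[R]_m -> 'cV[R]_m) : nnet n m.

Fixpoint nn_eval (n m : nat) (net : nnet n m) : 'cV[R]_n -> 'cV[R]_m :=
  match net in nnet n m return 'cV[R]_n -> 'cV[R]_m with
  | nn_layer _ _ b W Phi => fun y => Phi (b + W *m y)
  | nn_cons _ _ _ prev b W Phi => fun y => Phi (b + W *m nn_eval prev y)
  end.

Definition tstar (N M : nat) (g : 'I_M -> 'cV[R]_N -> R) (xbar z : 'cV[R]_N) : R :=
  if [exists j : 'I_M, 0 < g j z] then
    \big[Num.max/0]_(j < M | 0 < g j z) (g j z / (g j z - g j xbar))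
  else 0.

Definition projected_net (N P M : nat) (g : 'I_M -> 'cV[R]_N -> R)
    (xbar : 'cV[R]_N) (z : nnet P N) (w : 'cV[R]_P) : 'cV[R]_N :=
  let zw := nn_eval z w in
  (1 - tstar g xbar zw) *: zw + tstar g xbar zw *: xbar.

End Defs.

(* Main.v *)
Require Import Defs.
From HB Require Import structures.
From mathcomp Require Import all_boot all_order all_algebra.
From mathcomp Require Import all_classical all_reals all_analysis.
Import Order.TTheory GRing.Theory Num.Theory.
Import numFieldNormedType.Exports.
From mathcomp Require Import ring.
Local Open Scope ring_scope.

Theorem proposition3p1 (R : realType) (N P M : nat)
    (f : 'I_P -> 'cV[R]_N -> R) (g : 'I_M -> 'cV[R]_N -> R) (xbar : 'cV[R]_N) :
  (forall i, strictly_convex_fun (f i) /\ C1_fun (f i)) ->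
  (forall j, convex_fun (g j) /\ C1_fun (g j)) ->
  mo_bounded f g ->
  (forall j, g j xbar < 0) ->
  forall (z : nnet R P N) (w : 'cV[R]_P),
    weight_simplex w -> feasible g (projected_net g xbar z w).
Proof.
move=> _ hg _ hxb z w _ j.
rewrite /projected_net /=.
set zw := nn_eval z w.
set t := tstar g xbar zw.
have key : (0 <= t /\ t <= 1) /\ (forall k, 0 < g k zw -> g k zw / (g k zw - g k xbar) <= t).
  rewrite /t /tstar; case: ifP => [/existsP [k0 hk0]|/existsPn hn].
  - have lt1 : forall k, 0 < g k zw -> g k zw / (g k zw - g k xbar) <= 1.
      move=> k hk; have hxk := hxb k.
      rewrite ler_pdivrMr; last by rewrite subr_gt0 (lt_trans hxk hk).
      by rewrite mul1r lerDl oppr_ge0 ltW.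
    have ge : forall k, 0 < g k zw -> g k zw / (g k zw - g k xbar) <= \big[Num.max/0]_(j < M | 0 < g j zw) (g j zw / (g j zw - g j xbar)).
      by move=> k hk; apply: le_bigmax_cond.
    split; last exact: ge.
    split.
      apply: le_trans (ge _ hk0).
      have hxk := hxb k0.
      by apply: divr_ge0; [exact: ltW | rewrite subr_ge0 ltW // (lt_trans hxk hk0)].
    by apply: bigmax_le => // k hk; exact: lt1.
  - split; first by rewrite lexx ler01.
    by move=> k hk; move: (hn k); rewrite hk.
case: key => [[t0 t1] hk].
have [cvx _] := hg j.
apply: le_trans (cvx _ _ _ t0 t1) _.
have hxj := hxb j.
case: (ltP 0 (g j zw)) => ha.
- have := hk j ha.
  have hd : 0 < g j zw - g j xbar by rewrite subr_gt0 (lt_trans hxj ha).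
  rewrite ler_pdivrMr // => h.
  have -> : (1 - t) * g j zw + t * g j xbar = g j zw - t * (g j zw - g j xbar) by ring.
  by rewrite subr_le0.
- rewrite -[X in _ <= X](addr0 0); apply: lerD; first by apply: mulr_ge0_le0 => //; rewrite subr_ge0.
  by apply: mulr_ge0_le0 => //; exact: ltW.
Qed.
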